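(* Assume $\|\hat F'(y)-\hat F'(x)\|_F\le L_{\hat F}\|y-x\|$ for all $x,y\in\mathcal F$, and that $\|\hat F'(x)\|\le M_{\hat F}$ for all $x\in\mathcal F$, for some $M_{\hat F}>0$. Let $\{x_k\}$ be computed by Scheme 1 with $$x_{k+1}=x_k-\eta_k\big(\hat F'(x_k)^*\hat F'(x_k)+\tau_kL_kI_n\big)^{-1}\hat F'(x_k)^*\hat F(x_k),$$ where $\tau_k>0$, $\eta_k>0$ and $\eta_k(2-\eta_k)\ge c>0$ for all $k\in\mathbb Z_+$. Then for $k\in\mathbb N$: $$\min_{i\in\{0,\dots,k-1\}}\|\nabla\hat f_2(x_i)\|^2\le\frac{8\big(2L_{\hat F}\max_{i\in\{0,\dots,k-1\}}\tau_i+M_{\hat F}^2\big)}{\eta(2-\eta)k}\sum_{i=0}^{k-1}\Big(\frac12\big(\tau_i-\hat f_1(x_i)\big)^2+\tau_i\big(\hat f_1(x_i)-\hat f_1(x_{i+1})\big)\Big),$$ where $\eta\in\operatorname{Argmin}_{k\in\mathbb Z_+}\{\eta_k(2-\eta_k)\}$.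
   Context: Let $F:\mathbb R^n\to\mathbb R^m$ be smooth, $\hat F=\frac1{\sqrt m}F$ with Jacobian $\hat F'(x)$ and its transpose $\hat F'(x)^*$; Euclidean norms, spectral norm for matrices, $\|\cdot\|_F$ Frobenius norm. $\hat f_1(x)=\|\hat F(x)\|$, $\hat f_2=\hat f_1^2$, $\psi_{x,L,\tau}(y)=\frac\tau2+\frac{\|\hat F(x)+\hat F'(x)(y-x)\|^2}{2\tau}+\frac L2\|y-x\|^2$. $\mathcal F$ closed convex with nonempty interior, $\mathcal L(\hat f_1(x_0))\subseteq\mathcal F$ and the generated sequence stays in $\mathcal F$. Scheme 1 (with the displayed update): input $x_0$, $L\in(0,L_{\hat F}]$, $L_0=L$; at iteration $k$ choose $\tau_k$, compute $x_{k+1}$; if $\hat f_1(x_{k+1})>\psi_{x_k,L_k,\tau_k}(x_{k+1})$, set $L_k:=\min\{2L_k,2L_{\hat F}\}$ and recompute; otherwise $L_{k+1}=\max\{L_k/2,L\}$. *)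

(* Defs.v *)
From HB Require Import structures.
From mathcomp Require Import all_boot all_order all_algebra.
From mathcomp Require Import all_classical all_reals all_analysis.
Set Implicit Arguments. Unset Strict Implicit. Unset Printing Implicit Defensive.
Import Order.TTheory GRing.Theory Num.Theory.
Import numFieldNormedType.Exports.
Local Open Scope classical_set_scope.
Local Open Scope ring_scope.

Section Defs.
Variable R : realType.

Definition enorm (p : nat) (v : 'cV[R]_p) : R :=
  Num.sqrt (\sum_(i < p) (v i 0) ^+ 2).

Definition fnorm (p q : nat) (A : 'M[R]_(p, q)) : R :=
  Num.sqrt (\sum_(i < p) \sum_(j < q) (A i j) ^+ 2).

Definition specnorm (p q : nat) (A : 'M[R]_(p, q)) : R :=
  sup [set enorm (A *m v) | v in [set v : 'cV[R]_q | enorm v <= 1]].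

Definition jacmx (n m : nat) (f : 'cV[R]_n -> 'cV[R]_m) (x : 'cV[R]_n)
  : 'M[R]_(m, n) :=
  \matrix_(i < m, j < n) ('D_(delta_mx j 0) f x) i 0.

Definition grad (n : nat) (f : 'cV[R]_n -> R) (x : 'cV[R]_n) : 'cV[R]_n :=
  \col_(j < n) 'D_(delta_mx j 0) f x.

Definition Fhat (n m : nat) (F : 'cV[R]_n -> 'cV[R]_m) : 'cV[R]_n -> 'cV[R]_m :=
  fun x => (Num.sqrt (m%:R))^-1 *: F x.

Definition f1 (n m : nat) (F : 'cV[R]_n -> 'cV[R]_m) (x : 'cV[R]_n) : R :=
  enorm (Fhat F x).

Definition f2 (n m : nat) (F : 'cV[R]_n -> 'cV[R]_m) (x : 'cV[R]_n) : R :=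
  f1 F x ^+ 2.

Definition psi (n m : nat) (F : 'cV[R]_n -> 'cV[R]_m) (x : 'cV[R]_n)
  (L tau : R) (y : 'cV[R]_n) : R :=
  tau / 2 + enorm (Fhat F x + jacmx (Fhat F) x *m (y - x)) ^+ 2 / (2 * tau)
  + L / 2 * enorm (y - x) ^+ 2.

Definition step (n m : nat) (F : 'cV[R]_n -> 'cV[R]_m) (x : 'cV[R]_n)
  (tau eta Lk : R) : 'cV[R]_n :=
  let J := jacmx (Fhat F) x in
  x - eta *: (invmx (J^T *m J + (tau * Lk) *: 1%:M) *m (J^T *m Fhat F x)).

(* Successive trial values of L_k in the inner loop of Scheme 1, starting
   from s: s, min(2s, 2 LF), ... *)
Fixpoint trialL (LF s : R) (j : nat) : R :=
  match j with
  | 0 => s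
  | j'.+1 => Num.min (2 * trialL LF s j') (2 * LF)
  end.

Definition accepted (n m : nat) (F : 'cV[R]_n -> 'cV[R]_m) (x : 'cV[R]_n)
  (tau eta Lk : R) : Prop :=
  f1 F (step F x tau eta Lk) <= psi F x Lk tau (step F x tau eta Lk).

(* {x_k} is generated by Scheme 1 with parameters tau_k, eta_k:
   Lstart k is the value of L_k at the start of iteration k,
   Lacc k the value of L_k at which the test is passed. *)
Definition scheme1 (n m : nat) (F : 'cV[R]_n -> 'cV[R]_m) (L LF : R)
  (x : nat -> 'cV[R]_n) (tau eta Lstart Lacc : nat -> R) : Prop :=
  Lstart 0%N = L /\
  (forall k, Lstart k.+1 = Num.max (Lacc k / 2) L) /\
  (forall k, exists j : nat,
      Lacc k = trialL LF (Lstart k) j /\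
      (forall j', (j' < j)%N ->
         ~ accepted F (x k) (tau k) (eta k) (trialL LF (Lstart k) j')) /\
      accepted F (x k) (tau k) (eta k) (Lacc k)) /\
  (forall k, x k.+1 = step F (x k) (tau k) (eta k) (Lacc k)).

End Defs.

(* Main.v *)
Require Import Defs.
From HB Require Import structures.
From mathcomp Require Import all_boot all_order all_algebra.
From mathcomp Require Import all_classical all_reals all_analysis.
From mathcomp Require Import ring lra.
Import Order.TTheory GRing.Theory Num.Theory.
Import numFieldNormedType.Exports.
Local Open Scope classical_set_scope.
Local Open Scope ring_scope.
Set Implicit Arguments. Unset Strict Implicit. Unset Printing Implicit Defensive.
Section S.
Variable R : realType.
Lemma dFh (n m : nat) (F : 'cV[R]_n -> 'cV[R]_m) (x v : 'cV[R]_n) :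
  (forall y, differentiable F y) -> derivable (Fhat F) x v.
Proof.
move=> dF.
have h := @derivableZ _ _ _ F ((Num.sqrt m%:R)^-1) x v (@diff_derivable _ _ _ F x v (dF x)).
rewrite /Fhat; exact h.
Qed.

Lemma grad_f2 (n m : nat) (F : 'cV[R]_n -> 'cV[R]_m) (x : 'cV[R]_n) :
  (forall y, differentiable F y) ->
  grad (f2 F) x = 2 *: ((jacmx (Fhat F) x)^T *m Fhat F x).
Proof.
move=> dF.
have ef : f2 F = \sum_(i < m) ((fun y => Fhat F y i 0) ^+ 2).
  rewrite fct_sumE; apply/funext => y; under eq_bigr do rewrite exprfctE.
  by rewrite /f2 /f1 /enorm sqr_sqrtr // sumr_ge0 // => i _; rewrite sqr_ge0.
apply/matrixP => j k; rewrite !mxE ord1 ef.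
have dg : forall i, derivable (fun y => Fhat F y i 0) x (delta_mx j 0).
  by move=> i; apply: (derivable_mxP _ _ _).1; apply: dFh.
rewrite derive_sum; last first.
  move=> i; apply: derivableX; exact: dg.
rewrite mulr_sumr; apply: eq_bigr => i _.
rewrite deriveX // !mxE.
have -> : 'D_(delta_mx j 0) (fun y => Fhat F y i 0) x = ('D_(delta_mx j 0) (Fhat F) x) i 0.
  by rewrite derive_mx ?mxE //; apply: dFh.
rewrite /= expr1.
set a := ((Num.sqrt m%:R)^-1 * F x i 0). set b := (_ i 0).
have -> : (2 * a) *: b = 2 * a * b by [].
by rewrite -mulrA (mulrC a).
Qed.
Definition dot p (u v : 'cV[R]_p) : R := (u^T *m v) 0 0.

Lemma dotE p (u v : 'cV[R]_p) : dot u v = \sum_(i < p) u i 0 * v i 0.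
Proof. by rewrite /dot mxE; apply: eq_bigr => i _; rewrite mxE. Qed.

Lemma enorm_sq p (u : 'cV[R]_p) : enorm u ^+ 2 = dot u u.
Proof.
rewrite /enorm sqr_sqrtr ?dotE; last by rewrite sumr_ge0 // => i _; rewrite sqr_ge0.
by apply: eq_bigr => i _; rewrite expr2.
Qed.

Lemma dot_ge0 p (u : 'cV[R]_p) : 0 <= dot u u.
Proof. by rewrite -enorm_sq sqr_ge0. Qed.

Lemma enorm_ge0 p (u : 'cV[R]_p) : 0 <= enorm u.
Proof. exact: sqrtr_ge0. Qed.

Lemma dotC p (u v : 'cV[R]_p) : dot u v = dot v u.
Proof. by rewrite !dotE; apply: eq_bigr => i _; rewrite mulrC. Qed.

Lemma dotDl p (u v w : 'cV[R]_p) : dot (u + v) w = dot u w + dot v w.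
Proof. by rewrite /dot linearD /= mulmxDl mxE. Qed.

Lemma dotDr p (u v w : 'cV[R]_p) : dot w (u + v) = dot w u + dot w v.
Proof. by rewrite /dot mulmxDr mxE. Qed.

Lemma dotZl p a (u w : 'cV[R]_p) : dot (a *: u) w = a * dot u w.
Proof. by rewrite /dot linearZ /= -scalemxAl mxE. Qed.

Lemma dotZr p a (u w : 'cV[R]_p) : dot w (a *: u) = a * dot w u.
Proof. by rewrite /dot -scalemxAr mxE. Qed.

Lemma dotNl p (u w : 'cV[R]_p) : dot (- u) w = - dot u w.
Proof. by rewrite -scaleN1r dotZl mulN1r. Qed.

Lemma dotNr p (u w : 'cV[R]_p) : dot w (- u) = - dot w u.
Proof. by rewrite -scaleN1r dotZr mulN1r. Qed.

Lemma dot_mul p q (A : 'M[R]_(q, p)) (u : 'cV[R]_p) (v : 'cV[R]_q) :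
  dot (A *m u) v = dot u (A^T *m v).
Proof. by rewrite /dot trmx_mul mulmxA. Qed.

Lemma dot_eq0 p (u : 'cV[R]_p) : dot u u = 0 -> u = 0.
Proof.
rewrite dotE => /eqP; rewrite psumr_eq0; last by move=> i _; rewrite -expr2 sqr_ge0.
move=> /allP H; apply/matrixP => i j; rewrite ord1 mxE.
have := H i (mem_index_enum _); rewrite /= -expr2 sqrf_eq0 => /eqP //.
Qed.

Lemma JT_bound p q (J : 'M[R]_(q, p)) (M : R) : 0 < M ->
  (forall w, dot (J *m w) (J *m w) <= M ^+ 2 * dot w w) ->
  forall w, dot (J^T *m w) (J^T *m w) <= M ^+ 2 * dot w w.
Proof.
move=> M0 HJ w; set u := J^T *m w.
have e1 : dot u u = dot w (J *m u) by rewrite /u dot_mul trmxK.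
have := dot_ge0 (M ^+ 2 *: w - J *m u).
rewrite !(dotDl, dotDr, dotZl, dotZr, dotNl, dotNr) (dotC (J *m u) w) -e1.
have := HJ u; have := dot_ge0 u; have := dot_ge0 w.
set a := dot u u; set b := dot w w; set c := dot (J *m u) (J *m u).
move=> ha hb hc h.
have M2 : 0 < M ^+ 2 by rewrite exprn_gt0.
set N := M ^+ 2 in M2 hc h *.
have : N * (a - N * b) <= 0 by nra.
by rewrite pmulr_rle0 // subr_le0.
Qed.

Lemma enorm_dot p (u : 'cV[R]_p) : enorm u = Num.sqrt (dot u u).
Proof. by rewrite /enorm dotE; congr Num.sqrt; apply: eq_bigr => i _; rewrite expr2. Qed.

Lemma spec_bound p q (J : 'M[R]_(q, p)) (M : R) : specnorm J <= M ->
  forall w, dot (J *m w) (J *m w) <= M ^+ 2 * dot w w.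
Proof.
move=> HS.
set E := [set enorm (J *m v) | v in [set v : 'cV[R]_p | enorm v <= 1]].
have hs : has_sup E.
  split; first by exists (enorm (J *m 0)), 0; rewrite //= /enorm big1 ?sqrtr0 // => i _; rewrite mxE expr0n.
  exists (Num.sqrt (\sum_(i < q) (\sum_(j < p) `|J i j|) ^+ 2)) => _ [v /= hv <-].
  rewrite enorm_dot ler_sqrt; last by rewrite sumr_ge0 // => i _; rewrite sqr_ge0.
  rewrite dotE; apply: ler_sum => i _.
  have hvj : forall j, `|v j 0| <= 1.
    move=> j; have : v j 0 ^+ 2 <= 1.
      have : dot v v <= 1.
        by rewrite -enorm_sq; have := enorm_ge0 v; move: hv; set e := enorm v => hv he; nra.
      apply: le_trans; rewrite dotE (bigD1 j) //= -expr2 lerDl sumr_ge0 // => k _.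
      by rewrite -expr2 sqr_ge0.
    rewrite -(real_normK (num_real (v j 0))) => h.
    have := normr_ge0 (v j 0); set a := `|v j 0| in h *; nra.
  have hb : `|(J *m v) i 0| <= \sum_(j < p) `|J i j|.
    rewrite mxE; apply: le_trans (ler_norm_sum _ _ _) _.
    apply: ler_sum => j _; rewrite normrM; exact: ler_piMr.
  move/ler_normlP: hb => [hb1 hb2]; rewrite -expr2; nra.
move=> w.
have hw := dot_ge0 w.
case: (ler0P (dot w w)) => hw0.
  have w0 : w = 0 by apply: dot_eq0; apply/eqP; rewrite eq_le hw0 hw.
  have d00 : dot (0 : 'cV[R]_q) 0 = 0 by rewrite dotE big1 // => i _; rewrite mxE mul0r.
  have d00' : dot (0 : 'cV[R]_p) 0 = 0 by rewrite dotE big1 // => i _; rewrite mxE mul0r.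
  by rewrite w0 mulmx0 d00 d00' mulr0.
set e := Num.sqrt (dot w w).
have e0 : 0 < e by rewrite sqrtr_gt0.
have ee : e ^+ 2 = dot w w by rewrite sqr_sqrtr.
set v := e^-1 *: w.
have hv : enorm v <= 1.
  rewrite enorm_dot /v dotZl dotZr mulrA -expr2 -ee -exprMn mulVf ?gt_eqF //.
  by rewrite expr1n sqrtr1.
have := sup_upper_bound hs (ex_intro2 _ _ v hv erefl).
move=> h1; have h2 := le_trans h1 HS.
have h3 : dot (J *m v) (J *m v) <= M ^+ 2.
  rewrite -enorm_sq; have := enorm_ge0 (J *m v); move: h2; set a := enorm _ => h2 ha.
  have : 0 <= M by apply: le_trans h2.
  nra.
move: h3; rewrite /v -scalemxAr dotZl dotZr mulrA -expr2 => h3.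
rewrite -ee.
have ie : 0 < e^-1 ^+ 2 by rewrite exprn_gt0 // invr_gt0.
have : dot (J *m w) (J *m w) = e ^+ 2 * (e^-1 ^+ 2 * dot (J *m w) (J *m w)).
  by rewrite mulrA -exprMn mulfV ?gt_eqF // expr1n mul1r.
move=> ->; rewrite [M ^+ 2 * _]mulrC; apply: ler_wpM2l => //; rewrite sqr_ge0 //.
Qed.
Lemma A_unit p q (J : 'M[R]_(q, p)) (s : R) : 0 < s ->
  (J^T *m J + s *: 1%:M) \in unitmx.
Proof.
move=> s0; rewrite unitmxE unitfE; apply/negP => /det0P [v vn0 vA].
set h := v^T.
have e1 : dot h ((J^T *m J + s *: 1%:M) *m h) = 0.
  by rewrite /dot /h trmxK mulmxA vA mul0mx mxE.
move: e1; rewrite mulmxDl -mulmxA -scalemxAl mul1mx dotDr dotZr -dot_mul.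
have := dot_ge0 (J *m h); have := dot_ge0 h => hb ha e.
have hh : dot h h = 0 by nra.
have := dot_eq0 hh; rewrite /h => /(congr1 trmx); rewrite trmxK trmx0 => v0.
by move: vn0; rewrite v0 eqxx.
Qed.

Lemma key p q (J : 'M[R]_(q, p)) (Fx : 'cV[R]_q) (M t L eta : R) :
  0 < M -> (forall w, dot (J *m w) (J *m w) <= M ^+ 2 * dot w w) ->
  0 < t -> 0 < L ->
  let d := eta *: (invmx (J^T *m J + (t * L) *: 1%:M) *m (J^T *m Fx)) in
  exists Q, 0 <= Q /\
    dot (J^T *m Fx) (J^T *m Fx) <= (M ^+ 2 + t * L) * Q /\
    dot (Fx + J *m (- d)) (Fx + J *m (- d)) + t * L * (eta ^+ 2 * dot (invmx (J^T *m J + (t * L) *: 1%:M) *m (J^T *m Fx)) (invmx (J^T *m J + (t * L) *: 1%:M) *m (J^T *m Fx)))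
      = dot Fx Fx - eta * (2 - eta) * Q.
Proof.
move=> M0 HJ t0 L0 d.
have s0 : 0 < t * L by rewrite mulr_gt0.
set s := t * L in s0 d *.
set A := J^T *m J + s *: 1%:M in d *.
set g := J^T *m Fx in d *.
set h := invmx A *m g in d *.
have Ah : A *m h = g by rewrite /h mulmxA mulmxV ?mul1mx // A_unit.
have Ah2 : A *m h = J^T *m (J *m h) + s *: h.
  by rewrite /A mulmxDl -mulmxA -scalemxAl mul1mx.
set a := dot (J *m h) (J *m h).
set b := dot h h.
have ha : 0 <= a := dot_ge0 _.
have hb : 0 <= b := dot_ge0 _.
exists (a + s * b); split; first by rewrite addr_ge0 // mulr_ge0 // ltW.
split.
  rewrite -Ah Ah2 !(dotDl, dotDr, dotZl, dotZr).
  have e1 : dot (J^T *m (J *m h)) h = a by rewrite dot_mul trmxK.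
  rewrite e1 (dotC h) e1.
  have hu := JT_bound M0 HJ (J *m h).
  have hjb := HJ h.
  set u := dot _ _ in hu *.
  rewrite -/a -/b in hu hjb *.
  have M2 : 0 < M ^+ 2 by rewrite exprn_gt0.
  set N := M ^+ 2 in M2 hu hjb *.
  nra.
have eFJ : dot Fx (J *m h) = a + s * b.
  by rewrite dotC dot_mul -/g -Ah Ah2 dotDr dotZr (dotC h) dot_mul trmxK.
rewrite /d mulmxN -scalemxAr !(dotDl, dotDr, dotZl, dotZr, dotNl, dotNr).
rewrite eFJ (dotC (J *m h)) eFJ -/a -/b.
rewrite /s; ring.
Qed.
Lemma trialL_bound (LF s : R) : 0 < s -> s <= LF ->
  forall j, 0 < trialL LF s j /\ trialL LF s j <= 2 * LF.
Proof.
move=> s0 sL; elim=> [|j [IH1 IH2]] /=; first by split => //; lra.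
have LF0 : 0 < LF by apply: lt_le_trans sL.
split; first by rewrite lt_min; apply/andP; split; rewrite mulr_gt0.
by rewrite ge_min lexx orbT.
Qed.

Lemma Lacc_bound (n m : nat) (F : 'cV[R]_n -> 'cV[R]_m) (L LF : R)
  (x : nat -> 'cV[R]_n) (tau eta Lstart Lacc : nat -> R) :
  0 < L -> L <= LF -> scheme1 F L LF x tau eta Lstart Lacc ->
  forall k, 0 < Lacc k /\ Lacc k <= 2 * LF.
Proof.
move=> L0 LLF [h0 [hS [hA _]]].
have Ls : forall k, L <= Lstart k /\ Lstart k <= LF.
  elim=> [|k [IH1 IH2]]; first by rewrite h0; split => //.
  rewrite hS; have [j [-> _]] := hA k.
  have [t1 t2] := trialL_bound (lt_le_trans L0 IH1) IH2 j.
  split; first by rewrite le_max lexx orbT.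
  by rewrite ge_max LLF andbT; lra.
move=> k; have [j [-> _]] := hA k; have [l1 l2] := Ls k.
exact: trialL_bound (lt_le_trans L0 l1) l2 j.
Qed.

Lemma per_iter (n m : nat) (F : 'cV[R]_n -> 'cV[R]_m) (MF L LF : R)
  (x : nat -> 'cV[R]_n) (tau eta Lstart Lacc : nat -> R) (Fs : set 'cV[R]_n) :
  (forall y, differentiable F y) ->
  0 < MF -> (forall y, Fs y -> specnorm (jacmx (Fhat F) y) <= MF) ->
  0 < L -> L <= LF ->
  (forall k, 0 < tau k) -> (forall k, 0 < eta k * (2 - eta k)) ->
  scheme1 F L LF x tau eta Lstart Lacc ->
  (forall k, Fs (x k)) ->
  forall k,
    0 <= 2^-1 * (tau k - f1 F (x k)) ^+ 2 + tau k * (f1 F (x k) - f1 F (x k.+1)) /\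
    eta k * (2 - eta k) * enorm (grad (f2 F) (x k)) ^+ 2 <=
    8 * (2 * LF * tau k + MF ^+ 2) *
      (2^-1 * (tau k - f1 F (x k)) ^+ 2 + tau k * (f1 F (x k) - f1 F (x k.+1))).
Proof.
move=> dF M0 HM L0 LLF tau0 e0 sch xF k.
have [LA1 LA2] := Lacc_bound L0 LLF sch k.
have sch' := sch; move: sch' => [_ [_ [hA hx]]].
have [j [_ [_ acc]]] := hA k.
move: acc; rewrite /accepted -hx.
set J := jacmx (Fhat F) (x k).
set Fx := Fhat F (x k).
have HJ := spec_bound (HM _ (xF k)).
have [Q [Q0 [HG HE]]] := key Fx (eta k) M0 HJ (tau0 k) LA1.
rewrite /psi -/J -/Fx.
set h := invmx _ *m _ in HE *.
have -> : x k.+1 - x k = - (eta k *: h) by rewrite hx /step /= addrAC subrr add0r.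
rewrite !enorm_sq dotNl dotNr opprK dotZl dotZr [eta k * (eta k * _)]mulrA -expr2.
have -> : f1 F (x k) = enorm Fx by [].
rewrite grad_f2 // dotZl dotZr -/J -/Fx.
set f' := f1 F (x k.+1).
have f0 := enorm_ge0 Fx.
have FF : dot Fx Fx = enorm Fx ^+ 2 by rewrite enorm_sq.
set f := enorm Fx in f0 FF *.
set D := dot (Fx + _) _ in HE *.
set b := dot h h in HE *.
set gg := dot (J^T *m Fx) _ in HG *.
set t := tau k in HE HG *. set Lk := Lacc k in HE HG LA1 LA2 *.
set e := eta k * (2 - eta k) in HE *.
have t0 : 0 < t := tau0 k.
have ee : 0 < e := e0 k.
move=> Hacc.
have H2 : 2 * t * f' <= t ^+ 2 + f ^+ 2 - e * Q.
  have : 2 * t * f' <= 2 * t * (t / 2 + D / (2 * t) + Lk / 2 * (eta k ^+ 2 * b)).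
    by rewrite ler_pM2l // mulr_gt0.
  suff -> : 2 * t * (t / 2 + D / (2 * t) + Lk / 2 * (eta k ^+ 2 * b)) = t ^+ 2 + f ^+ 2 - e * Q by [].
  rewrite -FF -[t ^+ 2 + dot Fx Fx - e * Q]addrA -HE; field; exact: lt0r_neq0.
have eQ : 0 <= e * Q by rewrite mulr_ge0 // ltW.
have gg0 : 0 <= gg by apply: dot_ge0.
split; first nra.
have H3 : e * gg <= (MF ^+ 2 + t * Lk) * (e * Q).
  by rewrite mulrCA ler_pM2l.
have H4 : (MF ^+ 2 + t * Lk) * (e * Q) <= (MF ^+ 2 + 2 * LF * t) * (e * Q).
  by apply: ler_wpM2r => //; nra.
have H5 : e * Q <= (t - f) ^+ 2 + 2 * t * (f - f') by nra.
have M2 : 0 <= MF ^+ 2 + 2 * LF * t by have := sqr_ge0 MF; nra.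
have H6 := ler_wpM2l M2 H5.
rewrite -/e; nra.
Qed.
End S.

Theorem theorem6 (R : realType) (n m : nat) (F : 'cV[R]_n -> 'cV[R]_m)
  (Fs : set 'cV[R]_n) (LF MF L c : R)
  (x : nat -> 'cV[R]_n) (tau eta Lstart Lacc : nat -> R) :
  (forall y, differentiable F y) ->
  closed Fs -> convex_set Fs -> (interior Fs) !=set0 ->
  [set y | f1 F y <= f1 F (x 0%N)] `<=` Fs ->
  (forall y z, Fs y -> Fs z ->
     fnorm (jacmx (Fhat F) z - jacmx (Fhat F) y) <= LF * enorm (z - y)) ->
  0 < MF -> (forall y, Fs y -> specnorm (jacmx (Fhat F) y) <= MF) ->
  0 < L -> L <= LF ->
  0 < c ->
  (forall k, 0 < tau k) -> (forall k, 0 < eta k) ->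
  (forall k, c <= eta k * (2 - eta k)) ->
  scheme1 F L LF x tau eta Lstart Lacc ->
  (forall k, Fs (x k)) ->
  forall etastar : R,
    (exists j, etastar = eta j) ->
    (forall k, etastar * (2 - etastar) <= eta k * (2 - eta k)) ->
  forall k : nat, (0 < k)%N ->
    \big[Num.min/ enorm (grad (f2 F) (x 0%N)) ^+ 2]_(i < k)
        enorm (grad (f2 F) (x i)) ^+ 2
    <= 8 * (2 * LF * \big[Num.max/ tau 0%N]_(i < k) tau i + MF ^+ 2)
         / (etastar * (2 - etastar) * k%:R)
       * \sum_(i < k) (2^-1 * (tau i - f1 F (x i)) ^+ 2
                       + tau i * (f1 F (x i) - f1 F (x i.+1))).
Proof.
move=> dF _ _ _ _ _ M0 HM L0 LLF c0 tau0 eta0 hc sch xF es [j0 ej0] hes k k0.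
have e0 : forall k, 0 < eta k * (2 - eta k) by move=> i; apply: lt_le_trans (hc i).
have es0 : 0 < es * (2 - es) by rewrite ej0; exact: e0.
have LF0 : 0 < LF by apply: lt_le_trans LLF.
set tm := \big[Num.max/ tau 0%N]_(i < k) tau i.
set C := 2 * LF * tm + MF ^+ 2.
set G := fun i : nat => enorm (grad (f2 F) (x i)) ^+ 2.
set T := fun i : nat => 2^-1 * (tau i - f1 F (x i)) ^+ 2 + tau i * (f1 F (x i) - f1 F (x i.+1)).
set E := es * (2 - es) in es0 hes *.
have HG : forall i : 'I_k, G i <= 8 * C / E * T i.
  move=> i.
  have [T0 Hi] := per_iter dF M0 HM L0 LLF tau0 e0 sch xF i.
  rewrite -/(G i) -/(T i) in T0 Hi.
  have G0 : 0 <= G i by rewrite /G sqr_ge0.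
  have ti : tau i <= tm by rewrite /tm; exact: (le_bigmax _ _ i).
  have h1 : E * G i <= 8 * C * T i.
    apply: le_trans (ler_wpM2r G0 (hes i)) _; apply: le_trans Hi _.
    apply: ler_wpM2r => //; rewrite /C; nra.
  rewrite mulrAC ler_pdivlMr //; rewrite mulrC //.
have Hmin : forall i : 'I_k, \big[Num.min/ G 0%N]_(i < k) G i <= G i.
  by move=> i; exact: bigmin_le.
have Hsum : k%:R * \big[Num.min/ G 0%N]_(i < k) G i <= 8 * C / E * \sum_(i < k) T i.
  set mn := \big[Num.min/ G 0%N]_(i < k) G i in Hmin *.
  have -> : k%:R * mn = \sum_(i < k) mn by rewrite sumr_const card_ord mulr_natl.
  rewrite mulr_sumr; apply: ler_sum => i _; exact: le_trans (Hmin i) (HG i).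
have kp : 0 < k%:R :> R by rewrite ltr0n.
have -> : 8 * C / (E * k%:R) * \sum_(i < k) T i = (8 * C / E * \sum_(i < k) T i) / k%:R.
  by field; rewrite !lt0r_neq0.
by rewrite ler_pdivlMr // mulrC.
Qed.
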